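(* Let $H_n = \sum_{j=1}^n \frac{1}{j}$ denote the $n$th harmonic number and $\zeta$ the Riemann zeta function. Then $$\sum_{n = 1}^\infty H_{2n}\left(\zeta(2) - 1 - \frac{1}{2^2} - \ldots - \frac{1}{n^2} - \frac{1}{n} \right) = \log(2) - \frac{7}{8}\zeta(3) - 1.$$ *)

(* Defs.v *)
From Stdlib Require Import Reals.
From Coquelicot Require Import Coquelicot.
Open Scope R_scope.

Definition harmonic (n : nat) : R :=
  sum_n_m (fun j : nat => / INR j) 1 n.

Definition zeta (s : nat) : R :=
  Series (fun k : nat => / (INR (k + 1)) ^ s).

Definition psum2 (n : nat) : R :=
  sum_n_m (fun j : nat => / (INR j) ^ 2) 1 n.

(* Main.v *)
Require Import Defs.
From Stdlib Require Import Reals Lra Lia Psatz.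
From Coquelicot Require Import Coquelicot.
Open Scope R_scope.

Fixpoint sm (f : nat -> R) (n : nat) : R :=
  match n with O => 0 | S n' => sm f n' + f (S n') end.

Lemma sm_ext f g n : (forall k, (1 <= k <= n)%nat -> f k = g k) -> sm f n = sm g n.
Proof.
  induction n; intros H; simpl; auto.
  rewrite IHn by (intros; apply H; lia). rewrite H by lia. auto.
Qed.

Lemma sm_plus f g n : sm (fun k => f k + g k) n = sm f n + sm g n.
Proof. induction n; simpl; [lra|rewrite IHn; lra]. Qed.

Lemma sm_minus f g n : sm (fun k => f k - g k) n = sm f n - sm g n.
Proof. induction n; simpl; [lra|rewrite IHn; lra]. Qed.

Lemma sm_scal c f n : sm (fun k => c * f k) n = c * sm f n.
Proof. induction n; simpl; [lra|rewrite IHn; lra]. Qed.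

Lemma sm_le f g n : (forall k, (1 <= k <= n)%nat -> f k <= g k) -> sm f n <= sm g n.
Proof.
  induction n; intros H; simpl; [lra|].
  assert (sm f n <= sm g n) by (apply IHn; intros; apply H; lia).
  assert (f (S n) <= g (S n)) by (apply H; lia). lra.
Qed.

Lemma sm_shift f n : sm f (S n) = f 1%nat + sm (fun k => f (S k)) n.
Proof. induction n; simpl in *; [lra|]. rewrite IHn. lra. Qed.

Lemma sm_refl n : forall f, sm (fun k => f (S n - k)%nat) n = sm f n.
Proof.
  induction n; intros f; [reflexivity|].
  change (sm (fun k => f (S (S n) - k)%nat) (S n)) with (sm (fun k => f (S (S n) - k)%nat) n + f (S (S n) - S n)%nat).
  rewrite (sm_ext (fun k => f (S (S n) - k)%nat) (fun k => (fun j => f (S j)) (S n - k)%nat)).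
  2:{ intros k Hk. f_equal. lia. }
  rewrite (IHn (fun j => f (S j))). replace (S (S n) - S n)%nat with 1%nat by lia.
  pose proof (sm_shift f n) as Hs; simpl in Hs |- *; lra.
Qed.

Lemma sum_n_m_sm f n : sum_n_m f 1 n = sm f n.
Proof.
  induction n.
  - rewrite sum_n_m_zero by lia. reflexivity.
  - rewrite sum_n_Sm by lia. rewrite IHn. reflexivity.
Qed.

Lemma sum_n_sm a N : sum_n a N = sm (fun k => a (k - 1)%nat) (S N).
Proof.
  induction N.
  - rewrite sum_O. simpl. lra.
  - rewrite sum_Sn, IHN. change (plus ?x ?y) with (x + y).
    simpl sm at 2. replace (S (S N) - 1)%nat with (S N) by lia. reflexivity.
Qed.

(* triangle: pairs (i,y), i,y >= 1, i + y <= N *)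
Lemma tri g N : sm (fun s => sm (fun i => g i (s - i)%nat) (s - 1)) N
              = sm (fun i => sm (fun y => g i y) (N - i)) N.
Proof.
  induction N; [reflexivity|].
  change (sm (fun s => sm (fun i => g i (s - i)%nat) (s - 1)) (S N)) with
    (sm (fun s => sm (fun i => g i (s - i)%nat) (s - 1)) N + sm (fun i => g i (S N - i)%nat) (S N - 1)).
  change (sm (fun i => sm (fun y => g i y) (S N - i)) (S N)) with
    (sm (fun i => sm (fun y => g i y) (S N - i)) N + sm (fun y => g (S N) y) (S N - S N)).
  rewrite IHN. replace (S N - 1)%nat with N by lia.
  replace (S N - S N)%nat with 0%nat by lia. simpl sm at 3.
  rewrite Rplus_0_r.
  rewrite (sm_ext (fun i => sm (fun y => g i y) (S N - i)) (fun i => sm (fun y => g i y) (N - i) + g i (S N - i)%nat)).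
  2:{ intros k Hk. replace (S N - k)%nat with (S (N - k)) by lia. simpl. f_equal. }
  rewrite sm_plus. reflexivity.
Qed.

Lemma INR_ge1 k : (1 <= k)%nat -> 1 <= INR k.
Proof. intros; change 1 with (INR 1); apply le_INR; auto. Qed.

Definition H n := sm (fun k => / INR k) n.
Definition Od n := sm (fun k => / (2 * INR k - 1)) n.
Definition q2 n := sm (fun k => / (INR k)^2) n.
Definition q3 n := sm (fun k => / (INR k)^3) n.
Definition Y n := sm (fun s => H (s-1) / (INR s)^2) n.
Definition D n := sm (fun y => Od y / (INR y)^2) n.
Definition RR n := sm (fun a => (H n - H (n - a)) / (INR a)^2) n.
Definition RO n := sm (fun a => (Od n - Od (n - a)) / (INR a)^2) n.
Definition W n := sm (fun s => (H (s-1)/2 + Od (s-1)) / (2*INR s - 1)^2) n.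

Lemma H_S n : H (S n) = H n + / INR (S n).
Proof. reflexivity. Qed.
Lemma Od_S n : Od (S n) = Od n + / (2 * INR (S n) - 1).
Proof. reflexivity. Qed.

Lemma H2_S n : H (2 * S n) = H (2*n) + /(2*INR n + 1) + /(2*INR n + 2).
Proof.
  replace (2 * S n)%nat with (S (S (2 * n))) by lia.
  rewrite !H_S, !S_INR, mult_INR. simpl (INR 2).
  replace ((1 + 1) * INR n + 1 + 1) with (2 * INR n + 2) by lra.
  replace ((1 + 1) * INR n + 1) with (2 * INR n + 1) by lra. reflexivity.
Qed.

Lemma Od_H n : Od n = H (2*n) - H n / 2.
Proof.
  induction n. { unfold Od, H. simpl. lra. }
  rewrite Od_S, H2_S, H_S, IHn. rewrite S_INR.
  pose proof (pos_INR n).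
  field. lra.
Qed.

Lemma H2_1 n : H (S (2*n)) = Od (S n) + H n / 2.
Proof.
  rewrite H_S, Od_S, Od_H.
  replace (2 * INR (S n) - 1) with (INR (S (2*n))) by (repeat (rewrite S_INR || rewrite mult_INR); simpl; lra). lra.
Qed.

Definition g1 (i y : nat) : R := / (INR i * INR y * (INR i + INR y)).

Lemma row1 a M : (1 <= a)%nat ->
  sm (fun b => g1 a b) M = (H a + H M - H (M + a)) / (INR a)^2.
Proof.
  intros Ha. pose proof (INR_ge1 _ Ha).
  induction M.
  - simpl. unfold H at 2. simpl. field. lra.
  - simpl sm. rewrite IHM. replace (S M + a)%nat with (S (M + a)) by lia.
    rewrite !H_S. unfold g1. rewrite !S_INR, plus_INR.
    pose proof (pos_INR M). field. repeat split; lra.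
Qed.

Lemma diag1 n : sm (fun i => g1 i (S n - i)%nat) n = 2 * H n / (INR (S n))^2.
Proof.
  rewrite (sm_ext _ (fun i => / (INR (S n))^2 * (/ INR i + (fun k => / INR k) (S n - i)%nat))).
  2:{ intros k Hk. unfold g1. rewrite minus_INR by lia.
      pose proof (INR_ge1 k ltac:(lia)).
      assert (INR k < INR (S n)) by (apply lt_INR; lia).
      field. repeat split; lra. }
  pose proof (sm_refl n (fun k => / INR k)) as Hr; cbv beta in Hr.
  rewrite sm_scal, sm_plus, Hr. fold (H n). field.
  pose proof (INR_ge1 (S n) ltac:(lia)). lra.
Qed.

Lemma Y_id N : Y N = q3 N - RR N.
Proof.
  pose proof (tri g1 N) as T.
  rewrite (sm_ext _ (fun s => 2 * (H (s-1) / (INR s)^2))) in T.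
  2:{ intros s Hs. destruct s as [|n]; [lia|]. replace (S n - 1)%nat with n by lia.
      rewrite diag1. field. pose proof (INR_ge1 (S n) ltac:(lia)). lra. }
  rewrite (sm_ext (fun i => sm (fun y => g1 i y) (N - i))
     (fun a => (H a / (INR a)^2) - (H N - H (N - a)) / (INR a)^2)) in T.
  2:{ intros a Ha. rewrite row1 by lia. replace (N - a + a)%nat with N by lia.
      field. pose proof (INR_ge1 a ltac:(lia)). lra. }
  rewrite sm_scal, sm_minus in T. fold (Y N) in T. fold (RR N) in T.
  assert (E : sm (fun a => H a / (INR a)^2) N = Y N + q3 N).
  { unfold Y, q3. rewrite <- sm_plus. apply sm_ext. intros a Ha.
    destruct a as [|n]; [lia|]. replace (S n - 1)%nat with n by lia.
    rewrite H_S. field. pose proof (INR_ge1 (S n) ltac:(lia)). lra. }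
  lra.
Qed.

Definition g2 (y i : nat) : R := / (2 * INR y * (2 * INR i - 1) * (2 * INR y + 2 * INR i - 1)).

Lemma row2 y M : (1 <= y)%nat ->
  sm (fun i => g2 y i) M = (Od y + Od M - Od (M + y)) / (4 * (INR y)^2).
Proof.
  intros Hy. pose proof (INR_ge1 _ Hy).
  induction M.
  - simpl. unfold Od at 2. simpl. field. lra.
  - simpl sm. rewrite IHM. replace (S M + y)%nat with (S (M + y)) by lia.
    rewrite !Od_S. unfold g2. rewrite !S_INR, plus_INR.
    pose proof (pos_INR M). field. repeat split; lra.
Qed.

Lemma diag2 n : sm (fun y => g2 y (S n - y)%nat) n = (H n / 2 + Od n) / (2 * INR (S n) - 1)^2.
Proof.
  rewrite (sm_ext _ (fun y => / (2 * INR (S n) - 1)^2 * (/ 2 * / INR y + / (2 * INR (S n - y)%nat - 1)))).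
  2:{ intros k Hk. unfold g2. rewrite minus_INR by lia.
      pose proof (INR_ge1 k ltac:(lia)).
      assert (INR k + 1 <= INR (S n)) by (rewrite <- S_INR; apply le_INR; lia).
      field. repeat split; lra. }
  pose proof (sm_refl n (fun k => / (2 * INR k - 1))) as Hr; cbv beta in Hr.
  rewrite sm_scal, sm_plus, sm_scal, Hr. fold (H n). fold (Od n). field.
  pose proof (INR_ge1 (S n) ltac:(lia)). lra.
Qed.

Lemma W_id N : 4 * W N = D N - RO N.
Proof.
  pose proof (tri g2 N) as T.
  rewrite (sm_ext _ (fun s => (H (s-1)/2 + Od (s-1)) / (2*INR s - 1)^2)) in T.
  2:{ intros s Hs. destruct s as [|n]; [lia|]. replace (S n - 1)%nat with n by lia.
      rewrite diag2. reflexivity. }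
  rewrite (sm_ext (fun i => sm (fun y => g2 i y) (N - i))
     (fun a => / 4 * (Od a / (INR a)^2 - (Od N - Od (N - a)) / (INR a)^2))) in T.
  2:{ intros a Ha. rewrite row2 by lia. replace (N - a + a)%nat with N by lia.
      field. pose proof (INR_ge1 a ltac:(lia)). lra. }
  rewrite sm_scal, sm_minus in T. fold (W N) in T. fold (D N) in T. fold (RO N) in T.
  lra.
Qed.

Lemma Y_S n : Y (S n) = Y n + H n / (INR (S n))^2.
Proof. unfold Y. change (sm ?f (S n)) with (sm f n + f (S n)). cbv beta.
  replace (S n - 1)%nat with n by lia. reflexivity. Qed.

Lemma W_S n : W (S n) = W n + (H n/2 + Od n) / (2*INR (S n) - 1)^2.
Proof. unfold W. change (sm ?f (S n)) with (sm f n + f (S n)). cbv beta.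
  replace (S n - 1)%nat with n by lia. reflexivity. Qed.
Lemma D_S n : D (S n) = D n + Od (S n) / (INR (S n))^2.
Proof. reflexivity. Qed.

Lemma parity N : Y (2 * N) = W N + D N / 4 + Y N / 8.
Proof.
  induction N.
  - unfold Y, W, D. simpl. lra.
  - replace (2 * S N)%nat with (S (S (2 * N))) by lia.
    rewrite !Y_S, IHN.
    rewrite W_S, D_S. rewrite H2_1, (Od_H N).
    replace (INR (S (S (2 * N)))) with (2 * INR (S N)) by (repeat (rewrite S_INR || rewrite mult_INR); simpl; lra).
    replace (INR (S (2 * N))) with (2 * INR (S N) - 1) by (repeat (rewrite S_INR || rewrite mult_INR); simpl; lra).
    rewrite Od_S, Od_H.
    pose proof (INR_ge1 (S N) ltac:(lia)).
    field. lra.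
Qed.

Lemma D_id N : D N = 2 * Y (2 * N) - Y N / 4 + RO N / 2.
Proof. rewrite parity. pose proof (W_id N). lra. Qed.

Definition z2 := zeta 2.
Definition r n := z2 - q2 n - / INR n.
Definition E n := sm (fun k => H (2*k)) n.
Definition P n := sm (fun k => H (2*k) * r k) n.
Definition Q n := sm (fun k => E k / (INR k * (INR k + 1)^2)) n.

Lemma q2_S n : q2 (S n) = q2 n + / (INR (S n))^2.
Proof. reflexivity. Qed.

Lemma I1 N : P (S N) = E (S N) * r (S N) - Q N.
Proof.
  induction N.
  - unfold P, E, Q. simpl. ring.
  - change (P (S (S N))) with (P (S N) + H (2 * S (S N)) * r (S (S N))).
    change (E (S (S N))) with (E (S N) + H (2 * S (S N))).
    change (Q (S N)) with (Q N + E (S N) / (INR (S N) * (INR (S N) + 1)^2)).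
    rewrite IHN. unfold r. rewrite (q2_S (S N)). rewrite (S_INR (S N)).
    pose proof (INR_ge1 (S N) ltac:(lia)) as Hx.
    field. lra.
Qed.

Lemma I2 n : E n = ((2 * INR n + 1) * H (2*n) - 2 * INR n + H n / 2) / 2.
Proof.
  induction n.
  - unfold E, H. simpl. lra.
  - change (E (S n)) with (E n + H (2 * S n)). rewrite IHn, H2_S, H_S, S_INR.
    pose proof (pos_INR n) as Hx. field. lra.
Qed.

Definition C N := 2*(H(2*N) - H N) + q2 N/2 - H(2*N)/(INR N+1) + D (S N)
   - 4*(H(2*S N) - H (S N)) + q2 (S N) - 2*(q2 (S N) - 1) + (q2 N - H N/(INR N+1))/2.

Lemma I3 N : 2 * Q N = C N.
Proof.
  induction N.
  - unfold Q, C, D, Od, H, q2. simpl. field.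
  - change (Q (S N)) with (Q N + E (S N) / (INR (S N) * (INR (S N) + 1)^2)).
    rewrite Rmult_plus_distr_l, IHN. unfold C.
    rewrite (D_S (S N)), (Od_H (S (S N))), I2.
    rewrite !H2_S, !H_S, !q2_S, !S_INR.
    pose proof (pos_INR N) as Hx. field. lra.
Qed.

Lemma H_nonneg n : 0 <= H n.
Proof.
  induction n; [unfold H; simpl; lra|]. rewrite H_S.
  pose proof (INR_ge1 (S n) ltac:(lia)) as Hx.
  assert (0 < / INR (S n)) by (apply Rinv_0_lt_compat; lra). lra.
Qed.

Lemma H_mono m k : H m <= H (m + k).
Proof.
  induction k. { rewrite Nat.add_0_r. lra. }
  replace (m + S k)%nat with (S (m + k)) by lia. rewrite H_S.
  pose proof (INR_ge1 (S (m+k)) ltac:(lia)) as Hx.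
  assert (0 < / INR (S (m+k))) by (apply Rinv_0_lt_compat; lra). lra.
Qed.

Lemma lim_inv : is_lim_seq (fun n => / (INR n + 1)) 0.
Proof.
  assert (A1 : is_lim_seq (fun n => INR n + 1) p_infty).
  { apply (is_lim_seq_ext (fun n => INR (S n))). { intros; apply S_INR. }
    apply (is_lim_seq_incr_1 INR p_infty). apply is_lim_seq_INR. }
  pose proof (is_lim_seq_inv _ _ A1 ltac:(discriminate)) as A2.
  simpl in A2. exact A2.
Qed.

Lemma lim_sqrt_inv : is_lim_seq (fun n => sqrt (/ (INR n + 1))) 0.
Proof.
  replace (Finite 0) with (Finite (sqrt 0)) by (rewrite sqrt_0; auto).
  apply (is_lim_seq_continuous sqrt (fun n => / (INR n + 1)) 0).
  - apply continuity_pt_sqrt. lra.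
  - exact lim_inv.
Qed.

Lemma sqrt_step x : 0 <= x -> 2 * sqrt x + / (x + 1) <= 2 * sqrt (x + 1).
Proof.
  intros Hx.
  set (a := sqrt x). set (b := sqrt (x + 1)).
  assert (Ha : 0 <= a) by apply sqrt_pos.
  assert (Ha2 : a * a = x) by (apply sqrt_sqrt; lra).
  assert (Hb2 : b * b = x + 1) by (apply sqrt_sqrt; lra).
  assert (Hb : 1 <= b).
  { unfold b. apply (Rle_trans _ (sqrt 1)); [rewrite sqrt_1; lra| apply sqrt_le_1_alt; lra]. }
  assert (Hab : a * b <= x + 1/2) by (pose proof (Rle_0_sqr (a-b)) as Q; unfold Rsqr in Q; nra).
  assert (K1 : 1 <= (2 * b - 2 * a) * b) by nra.
  assert (K2 : / (x + 1) <= 1 / b).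
  { rewrite <- Hb2. unfold Rdiv. rewrite Rmult_1_l. apply Rinv_le_contravar; nra. }
  assert (K3 : 1 / b <= 2 * b - 2 * a).
  { apply (Rmult_le_reg_r b); [lra|]. unfold Rdiv. rewrite Rmult_assoc, Rinv_l by lra. lra. }
  lra.
Qed.

Lemma H_sqrt n : H n <= 2 * sqrt (INR n).
Proof.
  induction n. { unfold H. simpl. rewrite sqrt_0. lra. }
  rewrite H_S, S_INR. pose proof (sqrt_step (INR n) (pos_INR n)). lra.
Qed.

Lemma Hn_over_bound n : H n / (INR n + 1) <= 2 * sqrt (/ (INR n + 1)).
Proof.
  pose proof (pos_INR n) as Hn.
  set (y := INR n + 1).
  assert (Hy : 1 <= y) by (unfold y; lra).
  assert (S1 : sqrt (INR n) <= sqrt y) by (apply sqrt_le_1_alt; unfold y; lra).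
  pose proof (H_sqrt n).
  assert (Hs : 0 < sqrt y) by (apply sqrt_lt_R0; lra).
  assert (Hss : sqrt y * sqrt y = y) by (apply sqrt_sqrt; lra).
  rewrite sqrt_inv.
  apply (Rmult_le_reg_r y); [lra|]. unfold Rdiv. rewrite Rmult_assoc, Rinv_l by lra.
  rewrite Rmult_1_r. rewrite <- Hss at 2.
  replace (2 * / sqrt y * (sqrt y * sqrt y)) with (2 * sqrt y) by (field; lra).
  lra.
Qed.

Lemma lim_Hn : is_lim_seq (fun n => H n / (INR n + 1)) 0.
Proof.
  apply (is_lim_seq_le_le (fun _ => 0) _ (fun n => 2 * sqrt (/ (INR n + 1)))).
  - intros n. split; [|apply Hn_over_bound].
    apply Rdiv_le_0_compat; [apply H_nonneg|pose proof (pos_INR n); lra].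
  - apply is_lim_seq_const.
  - replace (Finite 0) with (Rbar_mult 2 0) by (simpl; f_equal; ring).
    apply is_lim_seq_scal_l. exact lim_sqrt_inv.
Qed.

Lemma lim_H2n : is_lim_seq (fun n => H (2 * n) / (INR n + 1)) 0.
Proof.
  assert (A1 : is_lim_seq (fun n => H (2 * n) / (INR (2 * n) + 1)) 0).
  { apply (is_lim_seq_subseq (fun m => H m / (INR m + 1)) 0 (fun n => 2 * n)%nat).
    - apply eventually_subseq. intros; lia.
    - exact lim_Hn. }
  apply (is_lim_seq_le_le (fun _ => 0) _ (fun n => 2 * (H (2 * n) / (INR (2 * n) + 1)))).
  - intros n. pose proof (pos_INR n) as Hp1. pose proof (H_nonneg (2*n)) as Hp2. rewrite mult_INR. simpl (INR 2).
    split. { apply Rdiv_le_0_compat; lra. }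
    assert (K : / (INR n + 1) <= 2 * / ((1+1) * INR n + 1)).
    { replace (2 * / ((1+1) * INR n + 1)) with (/ (INR n + 1) + / (((1+1) * INR n + 1) * (INR n + 1))) by (field; lra).
      assert (0 < / (((1+1) * INR n + 1) * (INR n + 1))) by (apply Rinv_0_lt_compat; nra). lra. }
    unfold Rdiv. nra.
  - apply is_lim_seq_const.
  - replace (Finite 0) with (Rbar_mult 2 0) by (simpl; f_equal; ring).
    apply is_lim_seq_scal_l. exact A1.
Qed.

Lemma ln1p_le x : -1 < x -> ln (1 + x) <= x.
Proof.
  intros Hx. rewrite <- (ln_exp x) at 2. apply ln_le; [lra|]. apply exp_ineq1_le.
Qed.

Lemma ln_step y : 0 < y -> / (y + 1) <= ln (y + 1) - ln y <= / y.
Proof.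
  intros Hy. split.
  - assert (E1 : y = (y + 1) * (1 + - / (y + 1))) by (field; lra).
    assert (0 < / (y+1) < 1).
    { split. apply Rinv_0_lt_compat; lra. rewrite <- Rinv_1. apply Rinv_lt_contravar; lra. }
    assert (ln y = ln (y + 1) + ln (1 + - / (y + 1))).
    { rewrite E1 at 1. apply ln_mult; lra. }
    pose proof (ln1p_le (- / (y + 1)) ltac:(lra)). lra.
  - assert (E1 : y + 1 = y * (1 + / y)) by (field; lra).
    assert (0 < / y) by (apply Rinv_0_lt_compat; lra).
    assert (ln (y + 1) = ln y + ln (1 + / y)).
    { rewrite E1 at 1. apply ln_mult; lra. }
    pose proof (ln1p_le (/ y) ltac:(lra)). lra.
Qed.

Lemma H_ln_up m k : (1 <= m)%nat -> H (m + k) - H m <= ln (INR (m + k)) - ln (INR m).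
Proof.
  intros Hm. induction k. { rewrite Nat.add_0_r. lra. }
  replace (m + S k)%nat with (S (m + k)) by lia. rewrite H_S.
  pose proof (INR_ge1 (m+k) ltac:(lia)) as Hx.
  pose proof (ln_step (INR (m+k)) ltac:(lra)) as Hl. rewrite <- S_INR in Hl. lra.
Qed.

Lemma H_ln_lo m k : H (m + k) - H m >= ln (INR (m + k) + 1) - ln (INR m + 1).
Proof.
  induction k. { rewrite Nat.add_0_r. lra. }
  replace (m + S k)%nat with (S (m + k)) by lia. rewrite H_S.
  pose proof (pos_INR (m+k)) as Hx.
  pose proof (ln_step (INR (m+k) + 1) ltac:(lra)) as Hl. rewrite S_INR. lra.
Qed.

Lemma lim_ln2 : is_lim_seq (fun n => H (2 * n) - H n) (ln 2).
Proof.
  apply is_lim_seq_incr_1.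
  apply (is_lim_seq_le_le (fun n => ln 2 - / (INR n + 1)) _ (fun _ => ln 2)).
  - intros n. set (N := S n).
    pose proof (INR_ge1 N ltac:(unfold N; lia)) as HN.
    replace (2 * N)%nat with (N + N)%nat by lia.
    pose proof (H_ln_up N N ltac:(unfold N; lia)) as U.
    pose proof (H_ln_lo N N) as L.
    rewrite plus_INR in U, L.
    assert (Q1 : ln (INR N + INR N) = ln 2 + ln (INR N)).
    { replace (INR N + INR N) with (2 * INR N) by ring. apply ln_mult; lra. }
    assert (Q2 : ln (INR N + INR N + 1 + 1) = ln 2 + ln (INR N + 1)).
    { replace (INR N + INR N + 1 + 1) with (2 * (INR N + 1)) by ring. apply ln_mult; lra. }
    pose proof (ln_step (INR N + INR N + 1) ltac:(lra)) as S1.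
    assert (K : / (INR N + INR N + 1) <= / (INR n + 1)).
    { apply Rinv_le_contravar. pose proof (pos_INR n); lra. unfold N. rewrite S_INR. pose proof (pos_INR n); lra. }
    split; lra.
  - replace (Finite (ln 2)) with (Finite (ln 2 - 0)) by (f_equal; ring).
    apply is_lim_seq_minus'. apply is_lim_seq_const. exact lim_inv.
  - apply is_lim_seq_const.
Qed.

Lemma q2_bound n : q2 (S n) <= 2 - / INR (S n).
Proof.
  induction n. { unfold q2. simpl. lra. }
  rewrite q2_S. rewrite (S_INR (S n)).
  pose proof (INR_ge1 (S n) ltac:(lia)) as Hx.
  assert (/ (INR (S n) + 1) ^ 2 <= / INR (S n) - / (INR (S n) + 1)).
  { replace (/ INR (S n) - / (INR (S n) + 1)) with (/ (INR (S n) * (INR (S n) + 1))) by (field; lra).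
    apply Rinv_le_contravar; nra. }
  lra.
Qed.

Lemma q2_nonneg_step n : 0 <= / INR (S n) ^ 2.
Proof. pose proof (INR_ge1 (S n) ltac:(lia)). apply Rlt_le, Rinv_0_lt_compat. nra. Qed.

Lemma q3_le n : q3 n <= q2 n.
Proof.
  unfold q3, q2. apply sm_le. intros k Hk. pose proof (INR_ge1 k ltac:(lia)).
  apply Rinv_le_contravar; nra.
Qed.

Lemma sum_zeta s N : sum_n (fun k => / (INR (k + 1)) ^ s) N = sm (fun k => / (INR k)^s) (S N).
Proof.
  rewrite sum_n_sm. apply sm_ext. intros k Hk. replace (k - 1 + 1)%nat with k by lia. reflexivity.
Qed.

Lemma sum_incr (a : nat -> R) : (forall n, 0 <= a n) -> forall n, sum_n a n <= sum_n a (S n).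
Proof. intros Ha n. rewrite sum_Sn. change (plus ?x ?y) with (x + y). pose proof (Ha (S n)). lra. Qed.

Lemma lim_q2 : is_lim_seq q2 z2.
Proof.
  assert (Ex : ex_series (fun k => / (INR (k + 1)) ^ 2)).
  { apply (ex_finite_lim_seq_incr _ 2).
    - apply sum_incr. intros n. rewrite Nat.add_1_r. apply q2_nonneg_step.
    - intros n. rewrite sum_zeta. fold (q2 (S n)). pose proof (q2_bound n).
      pose proof (INR_ge1 (S n) ltac:(lia)). assert (0 < / INR (S n)) by (apply Rinv_0_lt_compat; lra). lra. }
  pose proof (Series_correct _ Ex) as Sc.
  apply is_lim_seq_incr_1.
  apply (is_lim_seq_ext (sum_n (fun k => / (INR (k + 1)) ^ 2))).
  { intros n. rewrite sum_zeta. reflexivity. }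
  exact Sc.
Qed.

Lemma lim_q3 : is_lim_seq q3 (zeta 3).
Proof.
  assert (Ex : ex_series (fun k => / (INR (k + 1)) ^ 3)).
  { apply (ex_finite_lim_seq_incr _ 2).
    - apply sum_incr. intros n. rewrite Nat.add_1_r.
      pose proof (INR_ge1 (S n) ltac:(lia)). apply Rlt_le, Rinv_0_lt_compat. nra.
    - intros n. rewrite sum_zeta. fold (q3 (S n)). pose proof (q2_bound n). pose proof (q3_le (S n)).
      pose proof (INR_ge1 (S n) ltac:(lia)). assert (0 < / INR (S n)) by (apply Rinv_0_lt_compat; lra). lra. }
  pose proof (Series_correct _ Ex) as Sc.
  apply is_lim_seq_incr_1.
  apply (is_lim_seq_ext (sum_n (fun k => / (INR (k + 1)) ^ 3))).
  { intros n. rewrite sum_zeta. reflexivity. }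
  exact Sc.
Qed.

Lemma rstep m : 1 <= m ->
  / (m + 1) ^ 2 + / (m + 1) - / m <= 0 /\
  / ((m + 1) * (m + 2)) - / (m * (m + 1)) <= / (m + 1) ^ 2 + / (m + 1) - / m.
Proof.
  intros Hm. split.
  - replace (/ (m + 1) ^ 2 + / (m + 1) - / m) with (- / (m * (m + 1) ^ 2)) by (field; lra).
    assert (0 < / (m * (m + 1) ^ 2)) by (apply Rinv_0_lt_compat; nra). lra.
  - replace (/ (m + 1) ^ 2 + / (m + 1) - / m) with
      (/ ((m + 1) * (m + 2)) - / (m * (m + 1)) + / ((m+1)^2 * (m+2))) by (field; lra).
    assert (0 < / ((m+1)^2 * (m+2))) by (apply Rinv_0_lt_compat; nra). lra.
Qed.

Lemma rpart n M : (1 <= n)%nat ->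
  - / (INR n * (INR n + 1)) + / (INR (M + n) * (INR (M + n) + 1))
    <= q2 (M + n) - q2 n - / INR n + / INR (M + n) <= 0.
Proof.
  intros Hn. induction M.
  - simpl. lra.
  - replace (S M + n)%nat with (S (M + n)) by lia. rewrite q2_S, S_INR.
    pose proof (INR_ge1 (M+n) ltac:(lia)) as Hm.
    pose proof (rstep _ Hm) as [R1 R2].
    replace (INR (M + n) + 1 + 1) with (INR (M+n) + 2) by ring. lra.
Qed.

Lemma r_bound n : (1 <= n)%nat -> - / (INR n * (INR n + 1)) <= r n <= 0.
Proof.
  intros Hn.
  assert (L : is_lim_seq (fun M => q2 (M + n) - q2 n - / INR n + / INR (M + n)) (z2 - q2 n - / INR n + 0)).
  { apply is_lim_seq_plus'. apply is_lim_seq_minus'. apply is_lim_seq_minus'.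
    - apply (is_lim_seq_incr_n q2 n z2). exact lim_q2.
    - apply is_lim_seq_const.
    - apply is_lim_seq_const.
    - assert (A1 : is_lim_seq (fun M => INR (M + n)) p_infty) by (apply (is_lim_seq_incr_n INR n p_infty); apply is_lim_seq_INR).
      pose proof (is_lim_seq_inv _ _ A1 ltac:(discriminate)) as A2. simpl in A2. exact A2. }
  unfold r. split.
  - assert (Pw : forall M, - / (INR n * (INR n + 1)) <= q2 (M + n) - q2 n - / INR n + / INR (M + n)).
    { intros M. pose proof (rpart n M Hn) as [R1 _].
      pose proof (INR_ge1 (M + n) ltac:(lia)).
      assert (0 <= / (INR (M + n) * (INR (M + n) + 1))) by (apply Rlt_le, Rinv_0_lt_compat; nra). lra. }
    assert (Hl := is_lim_seq_le (fun _ => - / (INR n * (INR n + 1))) _ _ _ Pw (is_lim_seq_const _) L).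
    simpl in Hl. lra.
  - assert (Hl := is_lim_seq_le _ (fun _ => 0) _ _ (fun M => proj2 (rpart n M Hn)) L (is_lim_seq_const _)).
    simpl in Hl. lra.
Qed.

Lemma E_bound n : 0 <= E n <= INR n * H (2 * n).
Proof.
  induction n. { unfold E. simpl. lra. }
  change (E (S n)) with (E n + H (2 * S n)).
  pose proof (H_mono (2 * n) 2) as M. replace (2 * n + 2)%nat with (2 * S n)%nat in M by lia.
  pose proof (H_nonneg (2 * S n)). pose proof (H_nonneg (2 * n)). rewrite S_INR.
  pose proof (pos_INR n). nra.
Qed.

Lemma lim_Er : is_lim_seq (fun N => E (S N) * r (S N)) 0.
Proof.
  apply (is_lim_seq_le_le (fun N => - (H (2 * S N) / (INR (S N) + 1))) _ (fun _ => 0)).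
  - intros N. set (m := S N).
    pose proof (E_bound m) as [E1 E2]. pose proof (r_bound m ltac:(unfold m; lia)) as [R1 R2].
    pose proof (INR_ge1 m ltac:(unfold m; lia)) as Hm.
    pose proof (H_nonneg (2 * m)) as Hh.
    set (t := / (INR m * (INR m + 1))) in *.
    assert (Ht : 0 < t) by (apply Rinv_0_lt_compat; nra).
    assert (Eq : INR m * H (2 * m) * t = H (2 * m) / (INR m + 1)) by (unfold t; field; lra).
    split; [|nra].
    assert (Q1 : E m * r m >= - (E m * t)) by nra.
    assert (Q2 : E m * t <= INR m * H (2 * m) * t) by nra.
    lra.
  - replace (Finite 0) with (Finite (- 0)) by (f_equal; ring).
    apply (is_lim_seq_opp (fun N => H (2 * S N) / (INR (S N) + 1)) 0).
    apply (is_lim_seq_incr_1 (fun n => H (2 * n) / (INR n + 1))). exact lim_H2n.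
  - apply is_lim_seq_const.
Qed.

Lemma incr_bound (g : nat -> R) : (forall k, 0 <= g (S k) - g k <= / INR (S k)) ->
  forall m k : nat, 0 <= g (m + k)%nat - g m <= INR k / (INR m + 1).
Proof.
  intros Hg m k. induction k.
  - rewrite Nat.add_0_r. simpl. lra.
  - replace (m + S k)%nat with (S (m + k)) by lia.
    pose proof (Hg (m + k)%nat) as [G1 G2].
    assert (/ INR (S (m + k)) <= / (INR m + 1)).
    { apply Rinv_le_contravar. pose proof (pos_INR m); lra. rewrite S_INR, plus_INR. pose proof (pos_INR k); lra. }
    rewrite S_INR. unfold Rdiv in *. pose proof (pos_INR m).
    assert ((INR k + 1) * / (INR m + 1) = INR k * / (INR m + 1) + / (INR m + 1)) by (field; lra).
    lra.
Qed.

Lemma sum_recip n : sm (fun a => / (INR a * INR (S n - a))) n = 2 * H n / INR (S n).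
Proof.
  rewrite (sm_ext _ (fun i => / INR (S n) * (/ INR i + (fun k => / INR k) (S n - i)%nat))).
  2:{ intros k Hk. rewrite minus_INR by lia.
      pose proof (INR_ge1 k ltac:(lia)).
      assert (INR k < INR (S n)) by (apply lt_INR; lia).
      field. repeat split; lra. }
  pose proof (sm_refl n (fun k => / INR k)) as Hr; cbv beta in Hr.
  rewrite sm_scal, sm_plus, Hr. fold (H n). field.
  pose proof (INR_ge1 (S n) ltac:(lia)). lra.
Qed.

Lemma sm_zero n : sm (fun _ => 0) n = 0.
Proof. induction n; simpl; [|rewrite IHn]; lra. Qed.

Lemma R_bound (g : nat -> R) : (forall k, 0 <= g (S k) - g k <= / INR (S k)) ->
  forall n, 0 <= sm (fun a => (g n - g (n - a)%nat) / INR a ^ 2) n <= 2 * (H n / (INR n + 1)).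
Proof.
  intros Hg n. split.
  - rewrite <- (sm_zero n). apply sm_le. intros a Ha.
    pose proof (incr_bound g Hg (n - a) a) as [B1 _]. replace (n - a + a)%nat with n in B1 by lia.
    pose proof (INR_ge1 a ltac:(lia)). apply Rdiv_le_0_compat; nra.
  - replace (2 * (H n / (INR n + 1))) with (2 * H n / INR (S n)) by (rewrite S_INR; field; pose proof (pos_INR n); lra).
    rewrite <- sum_recip. apply sm_le. intros a Ha.
    pose proof (incr_bound g Hg (n - a) a) as [_ B2]. replace (n - a + a)%nat with n in B2 by lia.
    rewrite <- S_INR in B2. replace (S (n - a)) with (S n - a)%nat in B2 by lia.
    pose proof (INR_ge1 a ltac:(lia)) as Ha1.
    assert (Hs : 1 <= INR (S n - a)) by (apply INR_ge1; lia).
    replace (/ (INR a * INR (S n - a))) with ((INR a / INR (S n - a)) / INR a ^ 2) by (field; lra).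
    unfold Rdiv. apply Rmult_le_compat_r. apply Rlt_le, Rinv_0_lt_compat; nra.
    unfold Rdiv in B2. lra.
Qed.

Lemma H_incr k : 0 <= H (S k) - H k <= / INR (S k).
Proof. rewrite H_S. pose proof (INR_ge1 (S k) ltac:(lia)). assert (0 < / INR (S k)) by (apply Rinv_0_lt_compat; lra). lra. Qed.

Lemma Od_incr k : 0 <= Od (S k) - Od k <= / INR (S k).
Proof.
  rewrite Od_S. pose proof (INR_ge1 (S k) ltac:(lia)).
  assert (0 < / (2 * INR (S k) - 1)) by (apply Rinv_0_lt_compat; lra).
  assert (/ (2 * INR (S k) - 1) <= / INR (S k)) by (apply Rinv_le_contravar; lra). lra.
Qed.

Lemma lim_R (g : nat -> R) : (forall k, 0 <= g (S k) - g k <= / INR (S k)) ->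
  is_lim_seq (fun n => sm (fun a => (g n - g (n - a)%nat) / INR a ^ 2) n) 0.
Proof.
  intros Hg.
  apply (is_lim_seq_le_le (fun _ => 0) _ (fun n => 2 * (H n / (INR n + 1)))).
  - intros n. apply R_bound. exact Hg.
  - apply is_lim_seq_const.
  - replace (Finite 0) with (Rbar_mult 2 0) by (simpl; f_equal; ring).
    apply is_lim_seq_scal_l. exact lim_Hn.
Qed.

Lemma lim_Y : is_lim_seq Y (zeta 3).
Proof.
  apply (is_lim_seq_ext (fun N => q3 N - RR N)). { intros; symmetry; apply Y_id. }
  replace (Finite (zeta 3)) with (Finite (zeta 3 - 0)) by (f_equal; ring).
  apply is_lim_seq_minus'. exact lim_q3. apply (lim_R H). exact H_incr.
Qed.

Lemma lim_D : is_lim_seq D (7 / 4 * zeta 3).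
Proof.
  apply (is_lim_seq_ext (fun N => 2 * Y (2 * N) - Y N / 4 + RO N / 2)). { intros; symmetry; apply D_id. }
  replace (Finite (7 / 4 * zeta 3)) with (Finite (2 * zeta 3 - zeta 3 / 4 + 0 / 2)) by (f_equal; field).
  apply is_lim_seq_plus'. apply is_lim_seq_minus'.
  - apply (is_lim_seq_scal_l _ 2 (zeta 3)).
    apply (is_lim_seq_subseq Y (zeta 3) (fun n => 2 * n)%nat).
    + apply eventually_subseq. intros; lia.
    + exact lim_Y.
  - apply is_lim_seq_div'. exact lim_Y. apply is_lim_seq_const. lra.
  - apply is_lim_seq_div'. apply (lim_R Od). exact Od_incr. apply is_lim_seq_const. lra.
Qed.

Lemma lim_C : is_lim_seq C (2*(ln 2) + z2/2 - 0 + 7/4*zeta 3 - 4*(ln 2) + z2 - 2*(z2 - 1) + (z2 - 0)/2).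
Proof.
  unfold C.
  apply is_lim_seq_plus'. apply is_lim_seq_minus'. apply is_lim_seq_plus'. apply is_lim_seq_minus'.
  apply is_lim_seq_plus'. apply is_lim_seq_minus'. apply is_lim_seq_plus'.
  - apply (is_lim_seq_scal_l _ 2 (ln 2)). exact lim_ln2.
  - apply is_lim_seq_div'. exact lim_q2. apply is_lim_seq_const. lra.
  - exact lim_H2n.
  - apply (is_lim_seq_incr_1 D). exact lim_D.
  - apply (is_lim_seq_scal_l _ 4 (ln 2)).
    apply (is_lim_seq_incr_1 (fun n => H (2 * n) - H n)). exact lim_ln2.
  - apply (is_lim_seq_incr_1 q2). exact lim_q2.
  - apply (is_lim_seq_scal_l _ 2 (z2 - 1)). apply is_lim_seq_minus'.
    apply (is_lim_seq_incr_1 q2). exact lim_q2. apply is_lim_seq_const.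
  - apply is_lim_seq_div'. apply is_lim_seq_minus'. exact lim_q2. exact lim_Hn. apply is_lim_seq_const. lra.
Qed.

Lemma lim_P : is_lim_seq (fun N => P (S N)) (ln 2 - 7 / 8 * zeta 3 - 1).
Proof.
  apply (is_lim_seq_ext (fun N => E (S N) * r (S N) - C N / 2)).
  { intros N. rewrite I1. pose proof (I3 N). lra. }
  replace (ln 2 - 7 / 8 * zeta 3 - 1) with
    (0 - (2*(ln 2) + z2/2 - 0 + 7/4*zeta 3 - 4*(ln 2) + z2 - 2*(z2 - 1) + (z2 - 0)/2) / 2) by field.
  apply is_lim_seq_minus'. exact lim_Er.
  apply is_lim_seq_div'. exact lim_C. apply is_lim_seq_const. lra.
Qed.

Theorem mainTheorem1 :
  is_series
    (fun k : nat =>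
       harmonic (2 * (k + 1)) * (zeta 2 - psum2 (k + 1) - / INR (k + 1)))
    (ln 2 - 7 / 8 * zeta 3 - 1).
Proof.
  pose proof lim_P as L.
  apply (is_lim_seq_ext _ (sum_n (fun k : nat =>
       harmonic (2 * (k + 1)) * (zeta 2 - psum2 (k + 1) - / INR (k + 1))))) in L.
  - exact L.
  - intros N. rewrite sum_n_sm. unfold P. apply sm_ext. intros k Hk.
    replace (k - 1 + 1)%nat with k by lia.
    unfold harmonic, psum2. rewrite !sum_n_m_sm. reflexivity.
Qed.
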